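(* Let $B\in\mathbb{R}^{p\times H}$ be the incidence matrix described in the context, and assume the set of paths is nonempty. Then the all-ones vector $\mathbf 1\in\mathbb{R}^p$ does not belong to the column space of $B$.
   Context: $\mathcal G=(V,E)$ is a finite DAG; input neurons have no incoming edges, output neurons no outgoing edges, hidden neurons $\mathcal H$ ($H=|\mathcal H|$) are the rest. The parameter vector $\theta\in\mathbb{R}^p$ consists of one weight per edge and one bias $b_v$ per non-input neuron $v$. For $h\in\mathcal H$, $\mathrm{in}_h$ = indices of $b_h$ and of the weights of edges entering $h$, $\mathrm{out}_h$ = indices of the weights of edges leaving $h$. $B$ has columns indexed by $h\in\mathcal H$: $B_{ih}=-1$ if $i\in\mathrm{in}_h$, $1$ if $i\in\mathrm{out}_h$, $0$ otherwise. A path is a sequence $v_0\to\cdots\to v_d$ ($d\ge0$) along edges ending at an output neuron, where for $d=0$ the neuron $v_0$ is not an input neuron. *)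

(* Defs.v *)
From mathcomp Require Import all_boot all_order all_algebra.
Set Implicit Arguments. Unset Strict Implicit. Unset Printing Implicit Defensive.
Import Order.TTheory GRing.Theory Num.Theory.
Local Open Scope ring_scope.

(* A neural-network architecture: a finite directed graph (V, e), where
   [e u v] means there is an edge u -> v. *)
Section Network.
Variables (V : finType) (e : rel V).

Definition dag : Prop := forall u v, e u v -> ~~ connect e v u.

Definition is_input (v : V) : bool := [forall u, ~~ e u v].
Definition is_output (v : V) : bool := [forall w, ~~ e v w].
Definition is_hidden (v : V) : bool := ~~ is_input v && ~~ is_output v.

Definition edgeT : finType := {x : V * V | e x.1 x.2}.
Definition hiddenT : finType := {v : V | is_hidden v}.
Definition noninputT : finType := {v : V | ~~ is_input v}.
(* parameter indices: one weight per edge, one bias per non-input neuron *)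
Definition paramT : finType := (edgeT + noninputT)%type.

Definition in_h (h : V) (i : paramT) : bool :=
  match i with inl x => (val x).2 == h | inr v => val v == h end.
Definition out_h (h : V) (i : paramT) : bool :=
  match i with inl x => (val x).1 == h | inr _ => false end.

Definition Bentry (R : pzRingType) (i : paramT) (h : hiddenT) : R :=
  if in_h (val h) i then -1 else if out_h (val h) i then 1 else 0.

Definition Bmx (R : pzRingType) : 'M[R]_(#|paramT|, #|hiddenT|) :=
  \matrix_(i, j) Bentry R (enum_val i) (enum_val j).

(* a path v_0 -> ... -> v_d (the list s = [:: v_0; ...; v_d]) along edges, ending
   at an output neuron; if d = 0 then v_0 must not be an input neuron *)
Definition is_nn_path (s : seq V) : bool :=
  match s with
  | [::] => false
  | v0 :: s' => [&& path e v0 s', is_output (last v0 s') & (s' != [::]) || ~~ is_input v0]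
  end.

End Network.

(* Main.v *)
Require Import Defs.
From mathcomp Require Import all_boot all_order all_algebra.
Import Order.TTheory GRing.Theory Num.Theory.
Local Open Scope ring_scope.

Lemma out_noninput (V : finType) (e : rel V)
  (hpath : exists s : seq V, is_nn_path e s) :
  exists w, is_output e w && ~~ is_input e w.
Proof.
case: hpath => [[|v0 s]] //= /and3P [Hp Ho Hn].
case/lastP: s Hp Ho Hn => [|t x] Hp Ho Hn.
  by exists v0; rewrite Ho /=; move: Hn.
exists x; rewrite last_rcons in Ho; rewrite Ho /=.
rewrite rcons_path in Hp; case/andP: Hp => _ He.
by apply/negP => /forallP /(_ (last v0 t)); rewrite He.
Qed.

Theorem lemmaF5 (R : realFieldType) (V : finType) (e : rel V)
  (hdag : dag e) (hpath : exists s : seq V, is_nn_path e s) :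
  ~ exists c : 'cV[R]_#|hiddenT e|, Bmx e R *m c = const_mx 1.
Proof.
move=> [c Hc].
have [w /andP [Ho Hi]] := @out_noninput V e hpath.
pose i : paramT e := inr (Sub w Hi : noninputT e).
have := congr1 (fun M : 'M[R]_(#|paramT e|, 1) => M (enum_rank i) ord0) Hc.
rewrite /= !mxE big1 => [/eqP|j _]; first by rewrite eq_sym oner_eq0.
rewrite mxE enum_rankK /Bentry /=.
case: eqP => [Eh|_]; last by rewrite mul0r.
by case: (enum_val j) Eh => h hh /= Eh; move: hh; rewrite /is_hidden -Eh Ho andbF.
Qed.
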